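(* If $P$ is a rooted star poset with $n$ elements, then the degree of noninvertibility of promotion $\partial:\Lambda(P)\to\Lambda(P)$ equals $n$.
   Context: $\Lambda(P)$ is the set of labelings (bijections $P\to[n]$) of $P$. Promotion $\partial$: for non-maximal $x$, the $L$-successor of $x$ is the element greater than $x$ with minimal label; the promotion chain is $v_1=L^{-1}(1)$, $v_{i+1}$ the $L$-successor of $v_i$, ending at the first maximal $v_m$; $\partial(L)(x)=L(x)-1$ off the chain, $\partial(L)(v_i)=L(v_{i+1})-1$ for $i<m$, $\partial(L)(v_m)=n$. A rooted star poset is a poset with a unique maximal element (the root) that covers every other element, and no other relations. The degree of noninvertibility of $f:X\to X$ ($X$ finite) is $\deg(f)=\frac{1}{|X|}\sum_{x\in X}|f^{-1}(x)|^2$. *)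

(* Defs.v *)
From HB Require Import structures.
From mathcomp Require Import all_boot all_order all_algebra.
Set Implicit Arguments. Unset Strict Implicit. Unset Printing Implicit Defensive.
Import Order.Theory GRing.Theory Num.Theory.

(* Labels: the paper's label k in [n] = {1,...,n} is represented by the
   ordinal k-1 : 'I_n, with n = #|T|. *)

Section Promotion.
Context {disp : Order.disp_t} {T : finPOrderType disp}.

Local Notation n := #|T|.
Local Notation lab := {ffun T -> 'I_#|T|}.

Definition labelings : {set lab} := [set L : lab | injectiveb L].

Definition maximal (x : T) : bool := ~~ [exists y, (x < y)%O].

Definition lsucc (L : lab) (x : T) : option T :=
  [pick y | (x < y)%O && [forall z, (x < z)%O ==> (L y <= L z)%N]].

Fixpoint chain_from (L : lab) (fuel : nat) (x : T) : seq T :=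
  if fuel is k.+1 then
    match lsucc L x with
    | Some y => x :: chain_from L k y
    | None => [:: x]
    end
  else [:: x].

Definition prom_chain (L : lab) : seq T :=
  match [pick x | nat_of_ord (L x) == 0%N] with
  | Some v1 => chain_from L n v1
  | None => [::]
  end.

Definition promotion_nat (L : lab) (x : T) : nat :=
  let c := prom_chain L in
  if x \in c then
    let i := index x c in
    if (i.+1 < size c)%N then (L (nth x c i.+1)).-1 else n.-1
  else (L x).-1.

Definition promotion (L : lab) : lab :=
  [ffun x => insubd (L x) (promotion_nat L x)].

End Promotion.

Definition deg_noninv (U : finType) (f : U -> U) (A : {set U}) : rat :=
  ((\sum_(x in A) (#|[set y in A | f y == x]| ^ 2)%N%:R) / #|A|%:R)%R.

Definition rooted_star {disp : Order.disp_t} (T : finPOrderType disp) : Prop :=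
  exists r : T, forall x y : T, (x < y)%O = (y == r) && (x != r).

(* Main.v *)
Require Import Defs.
From HB Require Import structures.
From mathcomp Require Import all_boot all_order all_algebra.
From mathcomp Require Import zify.
Set Implicit Arguments. Unset Strict Implicit. Unset Printing Implicit Defensive.

Definition hf (N lr v : nat) : nat :=
  if v == lr then N.-1 else if v == 0%N then lr.-1 else v.-1.
Definition kf (N m w : nat) : nat :=
  if w == m then 0%N else if w == N.-1 then m.+1 else w.+1.


Lemma hf_inj N lr v w : (lr < N -> v < N -> w < N -> hf N lr v = hf N lr w -> v = w)%N.
Proof. move=> ? ? ?; rewrite /hf; repeat (case: eqP => ?); lia. Qed.
Ltac crush := repeat (case: eqP => ?); lia.
Lemma kf_inj N m v w : (m < N -> v < N -> w < N -> kf N m v = kf N m w -> v = w)%N.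
Proof. move=> ? ? ?; rewrite /kf;  crush. Qed.
Lemma kh N lr v : (lr < N -> v < N -> kf N (hf N lr 0) (hf N lr v) = v)%N.
Proof. move=> ? ?; rewrite /hf; repeat (case: eqP => ? /=); rewrite /kf; repeat (case: eqP => ?). all: lia. Qed.
Lemma hk N m w : (m < N -> w < N -> hf N (kf N m N.-1) (kf N m w) = w)%N.
Proof. move=> ? ?; rewrite /kf; repeat (case: eqP => ? /=); rewrite /hf; repeat (case: eqP => ?). all: lia. Qed.
Lemma hf_lt N lr v : (lr < N -> v < N -> hf N lr v < N)%N.
Proof. move=> ? ?; rewrite /hf;  crush. Qed.
Lemma kf_lt N m w : (m < N -> w < N -> kf N m w < N)%N.
Proof. move=> ? ?; rewrite /kf;  crush. Qed.
Lemma kf0 N m w : (kf N m w = 0 -> w = m)%N.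
Proof. rewrite /kf;  crush. Qed.

Section Star.
Context {disp : Order.disp_t} {T : finPOrderType disp} (r : T).
Hypothesis Hr : forall x y : T, (x < y)%O = (y == r) && (x != r).

Local Notation n := #|T|.
Import GRing.Theory.

Lemma n_gt0 : (0 < n)%N.
Proof. by apply/card_gt0P; exists r. Qed.

Lemma lsucc_root (L : {ffun T -> 'I_n}) : lsucc L r = None.
Proof.
rewrite /lsucc; case: pickP => // y; by rewrite Hr eqxx andbF.
Qed.

Lemma lsucc_leaf (L : {ffun T -> 'I_n}) x : x != r -> lsucc L x = Some r.
Proof.
move=> xr; rewrite /lsucc; case: pickP => [y /andP[] | /(_ r)].
  by rewrite Hr xr andbT => /eqP ->.
rewrite Hr eqxx xr /=; case/forallP => z; rewrite Hr xr andbT.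
by apply/implyP => /eqP ->.
Qed.

Lemma chain_root (L : {ffun T -> 'I_n}) k : chain_from L k r = [:: r].
Proof. by case: k => //= k; rewrite lsucc_root. Qed.

Lemma prom_chainE (L : {ffun T -> 'I_n}) a : injective L -> nat_of_ord (L a) = 0%N ->
  prom_chain L = a :: (if a == r then [::] else [:: r]).
Proof.
move=> Li La; rewrite /prom_chain; case: pickP => [b /eqP Lb | /(_ a)]; last by rewrite La.
have ->: b = a by apply: Li; apply: ord_inj; rewrite /= Lb La.
have -> : chain_from L #|T| a = chain_from L (#|T|.-1).+1 a by rewrite prednK // n_gt0.
rewrite /=; case: eqP => [-> | /eqP ar]; first by rewrite lsucc_root.
by rewrite lsucc_leaf // chain_root.
Qed.

Lemma promE (L : {ffun T -> 'I_n}) a : injective L -> nat_of_ord (L a) = 0%N ->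
  forall x, nat_of_ord (promotion L x) =
    if x == r then n.-1 else if x == a then (L r).-1 else (L x).-1.
Proof.
move=> Li La x; rewrite ffunE val_insubd /promotion_nat (prom_chainE Li La).
have Hn := n_gt0.
have Hlt : forall y : T, ((L y).-1 < n)%N by move=> y; have := ltn_ord (L y); lia.
case: (eqVneq a r) => [ar | ar].
  subst a; rewrite inE; case: (eqVneq x r) => [-> | xr] /=.
    by rewrite ifT // ltn_predL.
  by rewrite Hlt.
case: (eqVneq x a) => [-> | xa] /=.
  by rewrite (negbTE ar) inE eqxx /= Hlt.
case: (eqVneq x r) => [-> | xr] /=.
  rewrite !inE eqxx orbT /= (negbTE ar) /=.
  by rewrite ifT // ltn_predL.
by rewrite !inE (negbTE xa) (negbTE xr) /= Hlt.
Qed.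

Lemma Lne (L : {ffun T -> 'I_n}) u v : injective L -> u != v ->
  (nat_of_ord (L u) == nat_of_ord (L v)) = false.
Proof. by move=> Li uv; apply/negbTE; apply: contra uv => /eqP/val_inj/Li ->. Qed.

Lemma zero_lab (L : {ffun T -> 'I_n}) : injective L -> exists a, nat_of_ord (L a) = 0%N.
Proof.
move=> Li; have := inj_card_onto Li (eq_leq (card_ord _)) (Ordinal n_gt0).
by case/codomP => a Ha; exists a; rewrite -Ha.
Qed.

Lemma promH (L : {ffun T -> 'I_n}) a : injective L -> nat_of_ord (L a) = 0%N ->
  forall x, nat_of_ord (promotion L x) = hf n (L r) (L x).
Proof.
move=> Li La x; rewrite (promE Li La) /hf.
case: (eqVneq x r) => [-> | xr]; first by rewrite eqxx.
rewrite (Lne Li xr); case: (eqVneq x a) => [-> | xa]; first by rewrite La.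
by rewrite -La (Lne Li xa).
Qed.

Lemma prom_lab (L : {ffun T -> 'I_n}) : L \in @labelings _ T -> promotion L \in @labelings _ T.
Proof.
rewrite !inE => /injectiveP Li; apply/injectiveP => x y.
have [a La] := zero_lab Li.
move=> E; have := congr1 (@nat_of_ord _) E; rewrite !(promH Li La) => /hf_inj H.
by apply: Li; apply: ord_inj; apply: H; apply: ltn_ord.
Qed.

Definition Lmk (M : {ffun T -> 'I_n}) (a : T) : {ffun T -> 'I_n} :=
  [ffun x => insubd (M x) (kf n (M a) (M x))].

Lemma LmkE (M : {ffun T -> 'I_n}) a x : nat_of_ord (Lmk M a x) = kf n (M a) (M x).
Proof. by rewrite ffunE val_insubd kf_lt. Qed.

Lemma Lmk_inj (M : {ffun T -> 'I_n}) : injective M -> injective (Lmk M).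
Proof.
move=> Mi a b /ffunP/(_ b)/(congr1 (@nat_of_ord _)); rewrite !LmkE => E.
have : kf n (M a) (M b) = 0%N by rewrite E /kf eqxx.
by move/kf0 => H; apply: Mi; apply: ord_inj.
Qed.

Lemma fiber (M : {ffun T -> 'I_n}) : M \in @labelings _ T -> nat_of_ord (M r) = n.-1 ->
  [set L in @labelings _ T | promotion L == M] = [set Lmk M a | a in T].
Proof.
rewrite inE => /injectiveP Mi Mr; apply/setP => L; rewrite !inE.
apply/andP/imsetP => [[/injectiveP Li /eqP PL] | [a _ ->]].
  have [a La] := zero_lab Li; exists a => //.
  apply/ffunP => x; apply: ord_inj; rewrite LmkE -PL !(promH Li La) La kh //.
have Li : injective (Lmk M a).
  move=> x y /(congr1 (@nat_of_ord _)); rewrite !LmkE => /kf_inj H.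
  by apply: Mi; apply: ord_inj; apply: H.
have La : nat_of_ord (Lmk M a a) = 0%N by rewrite LmkE /kf eqxx.
split; first by apply/injectiveP.
apply/eqP/ffunP => x; apply: ord_inj; rewrite (promH Li La) !LmkE Mr hk //.
Qed.

Lemma fiber0 (M : {ffun T -> 'I_n}) : nat_of_ord (M r) != n.-1 ->
  [set L in @labelings _ T | promotion L == M] = set0.
Proof.
move=> Mr; apply/setP => L; rewrite !inE; apply/negP => /andP[/injectiveP Li /eqP PL].
have [a La] := zero_lab Li.
by move: Mr; rewrite -PL (promH Li La) /hf eqxx eqxx.
Qed.

Lemma key : (\sum_(M in @labelings _ T) #|[set L in @labelings _ T | @promotion _ T L == M]| ^ 2
   = n * #|@labelings _ T|)%N.
Proof.
rewrite (eq_bigr (fun M => n * #|[set L in @labelings _ T | @promotion _ T L == M]|))%N; last first.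
  move=> M HM; case: (eqVneq (nat_of_ord (M r)) n.-1) => Mr.
    rewrite fiber // card_imset; last by apply: Lmk_inj; move: HM; rewrite inE => /injectiveP.
    by rewrite mulnn.
  by rewrite fiber0 // cards0 muln0.
rewrite -big_distrr /=; congr (_ * _)%N.
have -> : #|@labelings _ T| = (\sum_(L in @labelings _ T) 1)%N by rewrite sum1_card.
rewrite [RHS](partition_big (@promotion _ T) (mem (@labelings _ T))) //=; last first.
  by move=> L; apply: prom_lab.
apply: eq_bigr => M _.
transitivity (\sum_(L in [set L in @labelings _ T | promotion L == M]) 1)%N.
  by rewrite sum1_card.
by apply: eq_bigl => L; rewrite inE.
Qed.
End Star.

Theorem mainTheorem4 (disp : Order.disp_t) (T : finPOrderType disp) :
  rooted_star T ->
  deg_noninv (@promotion disp T) (@labelings disp T) = (#|T|%:R)%R.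
Proof.
case=> r Hr; rewrite /deg_noninv -GRing.natr_sum (key Hr) GRing.natrM.
have ne : #|@labelings _ T| != 0%N.
  apply/eqP => /eqP; rewrite cards_eq0 => /eqP/setP/(_ [ffun x => enum_rank x]).
  rewrite !inE => /negbT/negP; apply; apply/injectiveP => x y.
  by rewrite !ffunE => /enum_rank_inj.
by rewrite GRing.mulfK // Num.Theory.pnatr_eq0.
Qed.
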